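(* Let $(\mathcal F,d)$ be a metric space, $\Sigma=(\Sigma_M)_{M\in\mathbb N}$ a sequence of non-empty subsets of $\mathcal F$ and $\mathcal C\subset\mathcal F$ non-empty. If $\Sigma$ is $\gamma$-encodable for every $\gamma<\gamma^*(\mathcal C|\Sigma)$ (with $\gamma>0$), then $\gamma^*(\mathcal C|\Sigma)\le\gamma^*_e(\mathcal C)$.
   Context: Approximation speed: $\gamma^*(\mathcal C|\Sigma)=\sup\{\gamma\in\mathbb R:\sup_{f\in\mathcal C}\inf_{\Phi\in\Sigma_M}d(f,\Phi)=O(M^{-\gamma})\text{ as }M\to\infty\}\in[-\infty,\infty]$ ($\sup\emptyset=-\infty$). A finite $X\subset\mathcal C$ is an $\varepsilon$-covering of $\mathcal C$ if every point of $\mathcal C$ is within distance $\varepsilon$ of some point of $X$; $N(\mathcal C,d,\varepsilon)$ is the minimal size of such a covering ($+\infty$ if none), $H=\log_2N$, and $\gamma^*_e(\mathcal C)=\sup\{\gamma>0:H(\mathcal C,d,\varepsilon)=O(\varepsilon^{-1/\gamma})\text{ as }\varepsilon\to0\}$ ($0$ if empty). For $\gamma,h>0$, a $(\gamma,h)$-encoding of $\Sigma$ is a sequence $(\Sigma(\gamma,h)_M)_M$ such that for some $c_1,c_2>0$ and all $M$, $\Sigma(\gamma,h)_M$ is a $c_1M^{-\gamma}$-covering of $\Sigma_M$ with $\log_2|\Sigma(\gamma,h)_M|\le c_2M^{1+h}$. $\Sigma$ is $\gamma$-encodable if it admits a $(\gamma,h)$-encoding for every $h>0$. *)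

(* Defs.v *)
From HB Require Import structures.
From mathcomp Require Import all_boot all_order all_algebra.
From mathcomp Require Import all_classical all_reals all_analysis.
Set Implicit Arguments. Unset Strict Implicit. Unset Printing Implicit Defensive.
Import Order.TTheory GRing.Theory Num.Theory.
Local Open Scope classical_set_scope.
Local Open Scope ring_scope.

Section Defs.
Variables (R : realType) (T : Type) (d : T -> T -> R).

Definition is_metric : Prop :=
  [/\ forall x y, d x y = 0 <-> x = y,
      forall x y, d x y = d y x &
      forall x y z, d x z <= d x y + d y z].

(* X : 'I_n -> T lists (with possible repetitions) an eps-covering of A,
   X consisting of points of A. *)
Definition is_covering (A : set T) (eps : R) (n : nat) (X : 'I_n -> T) : Prop :=
  (forall i, A (X i)) /\ (forall x, A x -> exists i, d x (X i) <= eps).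

(* covering number N(A,d,eps) in \bar R (+oo if no finite covering) *)
Definition covering_number (A : set T) (eps : R) : \bar R :=
  ereal_inf [set ((n%:R : R)%:E) | n in
             [set n : nat | exists X : 'I_n -> T, is_covering A eps X]].

Definition entropy (A : set T) (eps : R) : \bar R :=
  match covering_number A eps with
  | EFin x => (ln x / ln 2)%:E
  | +oo%E => +oo%E
  | -oo%E => -oo%E
  end.

Definition entropy_rate (C : set T) : \bar R :=
  ereal_sup ([set (g%:E) | g in
     [set g : R | 0 < g /\ exists c eps0 : R, 0 < eps0 /\
        forall eps, 0 < eps -> eps < eps0 ->
          (entropy C eps <= (c * powR eps (- (1 / g)))%:E)%E]]
   `|` [set 0%E]).

Definition approx_error (C : set T) (S : set T) : \bar R :=
  ereal_sup [set ereal_inf [set ((d f p)%:E) | p in S] | f in C].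

Definition approx_speed (C : set T) (Sigma : nat -> set T) : \bar R :=
  ereal_sup [set (g%:E) | g in
    [set g : R | exists (c : R) (M0 : nat), forall M : nat, (0 < M)%N -> (M0 <= M)%N ->
        (approx_error C (Sigma M) <= (c * powR (M%:R) (- g))%:E)%E]].

Definition has_encoding (Sigma : nat -> set T) (g h : R) : Prop :=
  exists (n : nat -> nat) (X : forall M : nat, 'I_(n M) -> T) (c1 c2 : R),
    0 < c1 /\ 0 < c2 /\
    forall M : nat, (0 < M)%N ->
      is_covering (Sigma M) (c1 * powR (M%:R) (- g)) (X M) /\
      ln ((n M)%:R) / ln 2 <= c2 * powR (M%:R) (1 + h).

Definition encodable (Sigma : nat -> set T) (g : R) : Prop :=
  forall h : R, 0 < h -> has_encoding Sigma g h.

End Defs.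

(* Main.v *)
Require Import Defs.
From HB Require Import structures.
From mathcomp Require Import all_boot all_order all_algebra.
From mathcomp Require Import all_classical all_reals all_analysis.
From mathcomp Require Import ring lra.
Import Order.TTheory GRing.Theory Num.Theory.
Local Open Scope classical_set_scope.
Local Open Scope ring_scope.

Section Helpers.
Variables (R : realType) (T : Type) (d : T -> T -> R).

Lemma d_ge0 : is_metric d -> forall x y, 0 <= d x y.
Proof.
move=> [H0 Hs Ht] x y.
have := Ht x y x; rewrite (proj2 (H0 x x) erefl) (Hs y x) => h.
lra.
Qed.

Lemma entropy_le (A : set T) (e eps : R) (n : nat) (X : 'I_n -> T) :
  A !=set0 -> is_covering d A e X -> e <= eps ->
  (entropy d A eps <= (ln (n%:R) / ln 2)%:E)%E.
Proof.
move=> [a Aa] [HXA HXc] le_e.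
have cov : is_covering d A eps X.
  split=> // x Ax; have [i hi] := HXc x Ax; exists i; exact: le_trans hi le_e.
have ub : (covering_number d A eps <= (n%:R)%:E)%E.
  apply: ereal_inf_lbound; exists n => //; exists X; exact: cov.
have lb : ((1:R)%:E <= covering_number d A eps)%E.
  apply: le_ereal_inf_tmp => _ [m [Y [_ HY]] <-].
  rewrite lee_fin; case: m Y HY => [|m] Y HY.
    by have [i _] := HY a Aa; case: i.
  by rewrite ler1n.
rewrite /entropy; move: ub lb; case: (covering_number d A eps) => [x| |] //.
rewrite !lee_fin => xn x1.
have ln2 : 0 < ln (2:R) by apply: ln_gt0; lra.
rewrite ler_pM2r ?invr_gt0 //.
rewrite ler_ln // posrE; lra.
Qed.


Lemma claimA (Sigma : nat -> set T) (C : set T) (g gam c c1 : R) (M0 : nat)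
  (n : nat -> nat) (X : forall M : nat, 'I_(n M) -> T) :
  is_metric d -> 0 < gam -> gam < g ->
  (forall M : nat, (0 < M)%N -> (M0 <= M)%N ->
        (approx_error d C (Sigma M) <= (c * powR (M%:R) (- g))%:E)%E) ->
  (forall M : nat, (0 < M)%N -> is_covering d (Sigma M) (c1 * powR (M%:R) (- gam)) (X M)) ->
  forall M : nat, (0 < M)%N -> (M0 <= M)%N -> forall f, C f ->
  exists i, d f (X M i) <= (`|c| + c1 + 1) * powR (M%:R) (- gam).
Proof.
move=> Hm gam0 gamg Happ Hcov M M0p MM0 f Cf.
set a := powR (M%:R) (- g); set b := powR (M%:R) (- gam).
have b0 : 0 < b by apply: powR_gt0; rewrite ltr0n.
have a0 : 0 <= a by apply: powR_ge0.
have ab : a <= b by apply: ler_powR; [rewrite ler1n | lra].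
have cab : c * a <= `|c| * b.
  apply: (@le_trans _ _ (`|c| * a)); first by apply: ler_wpM2r => //; apply: ler_norm.
  by apply: ler_wpM2l.
have h2 : (ereal_inf [set ((d f p)%:E) | p in Sigma M] <= approx_error d C (Sigma M))%E.
  by apply: ereal_sup_ubound; exists f.
have h3 : (ereal_inf [set ((d f p)%:E) | p in Sigma M] < (c * a + b)%:E)%E.
  apply: (le_lt_trans h2); apply: (le_lt_trans (Happ M M0p MM0)).
  rewrite lte_fin -/a; lra.
have [_ [p Sp <-]] := ereal_inf_lt h3.
rewrite lte_fin => dfp.
have [_ HX] := Hcov M M0p.
have [i hi] := HX p Sp.
exists i.
have [_ _ Ht] := Hm.
have := Ht f p (X M i).
move: hi; rewrite -/b => hi; nra.
Qed.


Lemma keyLemma (Sigma : nat -> set T) (C : set T) (g gam s c : R) (M0 : nat) (c0 : T) :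
  is_metric d -> C c0 -> 0 < s -> s < gam -> gam < g ->
  (forall M : nat, (0 < M)%N -> (M0 <= M)%N ->
        (approx_error d C (Sigma M) <= (c * powR (M%:R) (- g))%:E)%E) ->
  has_encoding d Sigma gam (gam / s - 1) ->
  exists c' eps0 : R, 0 < eps0 /\
        forall eps, 0 < eps -> eps < eps0 ->
          (entropy d C eps <= (c' * powR eps (- (1 / s)))%:E)%E.
Proof.
move=> Hm Cc0 s0 sgam gamg Happ [n [X [c1 [c2 [c10 [c20 HX]]]]]].
have gam0 : 0 < gam by lra.
have [H0 Hsym Ht] := Hm.
pose K := `|c| + c1 + 1.
have K0 : 0 < K by rewrite /K; have := normr_ge0 c; lra.
have covC : forall M : nat, (0 < M)%N -> (M0 <= M)%N ->
    exists Y : 'I_(n M) -> T, is_covering d C (2 * (K * powR M%:R (- gam))) Y.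
  move=> M M0p MM0.
  pose rho := K * powR M%:R (- gam).
  have hA := @claimA Sigma C g gam c c1 M0 n X Hm gam0 gamg Happ
     (fun M Mp => (HX M Mp).1) M M0p MM0.
  have Hex : forall i : 'I_(n M), exists y, C y /\
      ((exists z, C z /\ d z (X M i) <= rho) -> d y (X M i) <= rho).
    move=> i; case: (pselect (exists z, C z /\ d z (X M i) <= rho)) => [[z [Cz hz]]|nz].
      by exists z; split.
    by exists c0; split => // h; case: nz.
  have [Y HY] := choice Hex.
  exists Y; split => [i|f Cf]; first by case: (HY i).
  have [i hi] := hA f Cf.
  exists i.
  have [_ hY] := HY i.
  have := hY (ex_intro _ f (conj Cf hi)).
  have := Ht f (X M i) (Y i).
  rewrite (Hsym (X M i) (Y i)).
  move: hi; rewrite -/rho; lra.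
pose P := powR (M0.+1)%:R gam.
have P0 : 0 < P by apply: powR_gt0; rewrite ltr0n.
pose eps0 := 2 * K / P.
exists (c2 * powR 2 (gam / s) * powR (2 * K) (1 / s)), eps0; split.
  by rewrite /eps0 divr_gt0 // mulr_gt0.
move=> eps eps_pos eps_lt.
pose t := powR (2 * K / eps) (1 / gam).
have t0 : 0 <= t by apply: powR_ge0.
have tg : powR t gam = 2 * K / eps.
  rewrite /t -powRrM (_ : 1 / gam * gam = 1); last first.
    by rewrite mul1r mulVf // gt_eqF.
  rewrite powRr1 // divr_ge0 //; [rewrite mulr_ge0 //; lra | lra].
have Plt : P < 2 * K / eps.
  move: eps_lt; rewrite /eps0 ltr_pdivlMr // => h.
  by rewrite ltr_pdivlMr // mulrC.
have tbig : (M0.+1)%:R < t.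
  rewrite ltNge; apply/negP => h.
  have := ge0_ler_powR (ltW gam0) _ _ h.
  rewrite tg -/P => h'.
  have : 2 * K / eps <= P by apply: h'; rewrite nnegrE.
  lra.
have /andP[tlo thi] := truncn_itv t0.
move: tlo thi; set k := Num.Def.trunc t => tlo thi.
pose M := k.+1.
have MM0 : (M0 <= M)%N.
  have : ((M0.+1)%:R < M%:R :> R) by apply: lt_trans tbig thi.
  by rewrite ltr_nat => /ltnW/ltnW.
have [Y HY] := covC M isT MM0.
have Mt : (M%:R : R) <= 2 * t.
  rewrite /M -natr1.
  have : (1 : R) <= (M0.+1)%:R by rewrite ler1n.
  lra.
have Q0 : 0 < powR (M%:R : R) gam by apply: powR_gt0; rewrite ltr0n.
have tQ : 2 * K / eps <= powR (M%:R : R) gam.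
  rewrite -tg; apply: ge0_ler_powR; rewrite ?nnegrE //; [exact: ltW | exact: ltW].
have rho_le : 2 * (K * powR M%:R (- gam)) <= eps.
  rewrite powRN mulrA ler_pdivrMr //.
  by rewrite [eps * _]mulrC -ler_pdivrMr.
apply: le_trans (@entropy_le C _ _ _ Y (ex_intro _ c0 Cc0) HY rho_le) _.
rewrite lee_fin.
apply: le_trans (HX M isT).2 _.
rewrite addrC subrK.
have gs0 : 0 <= gam / s by rewrite divr_ge0 //; lra.
have h1 : powR (M%:R : R) (gam / s) <= powR (2 * t) (gam / s).
  apply: ge0_ler_powR; rewrite ?nnegrE //; lra.
rewrite powRM ?t0 // in h1.
have e1 : powR t (gam / s) = powR (2 * K) (1 / s) * powR eps (- (1 / s)).
  rewrite /t -powRrM (_ : 1 / gam * (gam / s) = 1 / s); last first.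
    by field; apply/andP; split; rewrite gt_eqF.
  rewrite powRM; last 2 first.
  - rewrite mulr_ge0 //; lra.
  - by rewrite invr_ge0; lra.
  congr (_ * _).
  rewrite -(@powR_inv1 _ eps); last by lra.
  by rewrite -powRrM mulN1r.
rewrite e1 in h1.
rewrite -!mulrA; apply: ler_wpM2l; first by lra.
exact: h1.
Qed.

End Helpers.

Theorem mainTheorem10 (R : realType) (T : Type) (d : T -> T -> R)
  (Sigma : nat -> set T) (C : set T) :
  is_metric d ->
  (forall M : nat, Sigma M !=set0) ->
  C !=set0 ->
  (forall g : R, 0 < g -> (g%:E < approx_speed d C Sigma)%E -> encodable d Sigma g) ->
  (approx_speed d C Sigma <= entropy_rate d C)%E.
Proof.
move=> Hm HS [c0 Cc0] Henc.
have rate0 : (0 <= entropy_rate d C)%E by apply: ereal_sup_ubound; right.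
apply: ge_ereal_sup => _ [g [c [M0 Hg]] <-].
have gsp : (g%:E <= approx_speed d C Sigma)%E.
  by apply: ereal_sup_ubound; exists g => //; exists c, M0.
case: (leP g 0) => g0.
  by apply: le_trans rate0; rewrite lee_fin.
have key : forall s, 0 < s -> s < g -> (s%:E <= entropy_rate d C)%E.
  move=> s s0 sg.
  pose gam := (s + g) / 2.
  have sgam : s < gam by rewrite /gam; lra.
  have gamg : gam < g by rewrite /gam; lra.
  have gam0 : 0 < gam by lra.
  have hpos : 0 < gam / s - 1.
    have : 1 < gam / s by rewrite ltr_pdivlMr // mul1r.
    lra.
  have gamsp : (gam%:E < approx_speed d C Sigma)%E.
    by apply: lt_le_trans gsp; rewrite lte_fin.
  have enc := Henc gam gam0 gamsp (gam / s - 1) hpos.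
  have [c' [eps0 [e0 He]]] := @keyLemma _ _ _ _ _ _ _ _ _ _ _ Hm Cc0 s0 sgam gamg Hg enc.
  apply: ereal_sup_ubound; left; exists s => //; split => //.
  by exists c', eps0; split.
move: rate0 key; case: (entropy_rate d C) => [r| |] //; last first.
  by move=> _ _; apply: leey.
rewrite !lee_fin => r0 key.
rewrite leNgt; apply/negP => rg.
have h1 : 0 < (r + g) / 2 by lra.
have h2 : (r + g) / 2 < g by lra.
have := key _ h1 h2; rewrite lee_fin.
lra.
Qed.
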